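(* Suppose A1 and A3 hold and let $\{x_k\}$ be generated by Algorithm 1. Let $N_k=\sum_{j=0}^{k}(l_j+1)$ be the total number of evaluations of $f$ at trial points $x_j+\alpha_j\beta^l d_j$ performed in iterations $0,\dots,k$. Then $$N_k\le 2(k+1)+\frac{1}{\log\beta}\left[\log\bar\alpha-\log\alpha_0\right],$$ where $\bar\alpha=\min\{\alpha_0,\,2(1-\rho)c_1/(Lc_2^2)\}$.
   Context: Let $(X,\langle\cdot,\cdot\rangle)$ be a real Hilbert space with induced norm $\|\cdot\|$, and $f:X\to\mathbb{R}$ Fréchet differentiable with gradient $\nabla f$. Algorithm 1 (general non-monotone descent algorithm): parameters $x_0\in X$, $\alpha_0>0$, $\beta,\rho\in(0,1)$. For $k=0,1,2,\dots$: choose $d_k\in X$ with $\langle\nabla f(x_k),d_k\rangle<0$; then for $l=0,1,2,\dots$ choose a number $\nu_{k,l}\ge 0$ and test $$f(x_k+\alpha_k\beta^l d_k)\le f(x_k)+\rho\alpha_k\beta^l\langle\nabla f(x_k),d_k\rangle+\nu_{k,l};$$ let $l_k$ be the first $l$ for which this holds, set $\nu_k:=\nu_{k,l_k}$, $x_{k+1}=x_k+\alpha_k\beta^{l_k}d_k$ and $\alpha_{k+1}=\alpha_k\beta^{l_k-1}$. It is assumed the algorithm generates infinite sequences (all $l_k$ finite). Assumptions: A1: $\nabla f$ is Lipschitz continuous with constant $L>0$. A3: there are constants $c_1,c_2>0$ with $\langle\nabla f(x_k),d_k\rangle\le -c_1\|\nabla f(x_k)\|^2$ and $\|d_k\|\le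 c_2\|\nabla f(x_k)\|$ for all $k$. *)

(* Defs.v *)
From Stdlib Require Export Reals Lra Lia ZArith.
Open Scope R_scope.

Record Hilbert := {
  hcar :> Type;
  hzero : hcar;
  hadd : hcar -> hcar -> hcar;
  hopp : hcar -> hcar;
  hscal : R -> hcar -> hcar;
  hinner : hcar -> hcar -> R;
  hadd_assoc : forall x y z, hadd x (hadd y z) = hadd (hadd x y) z;
  hadd_comm : forall x y, hadd x y = hadd y x;
  hadd_zero : forall x, hadd x hzero = x;
  hadd_opp : forall x, hadd x (hopp x) = hzero;
  hscal_assoc : forall a b x, hscal a (hscal b x) = hscal (a * b) x;
  hscal_one : forall x, hscal 1 x = x;
  hscal_distr_l : forall a x y, hscal a (hadd x y) = hadd (hscal a x) (hscal a y);
  hscal_distr_r : forall a b x, hscal (a + b) x = hadd (hscal a x) (hscal b x);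
  hinner_sym : forall x y, hinner x y = hinner y x;
  hinner_add_l : forall x y z, hinner (hadd x y) z = hinner x z + hinner y z;
  hinner_scal_l : forall a x y, hinner (hscal a x) y = a * hinner x y;
  hinner_pos : forall x, 0 <= hinner x x;
  hinner_def : forall x, hinner x x = 0 -> x = hzero;
  hcomplete : forall u : nat -> hcar,
    (forall eps, 0 < eps -> exists N, forall m n, (N <= m)%nat -> (N <= n)%nat ->
        sqrt (hinner (hadd (u m) (hopp (u n))) (hadd (u m) (hopp (u n)))) < eps) ->
    exists lim, forall eps, 0 < eps -> exists N, forall n, (N <= n)%nat ->
        sqrt (hinner (hadd (u n) (hopp lim)) (hadd (u n) (hopp lim))) < eps
}.

Arguments hzero {h}.
Arguments hadd {h}.
Arguments hopp {h}.
Arguments hscal {h}.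
Arguments hinner {h}.

Definition hnorm {X : Hilbert} (x : X) : R := sqrt (hinner x x).
Definition hsub {X : Hilbert} (x y : X) : X := hadd x (hopp y).

Definition is_gradient {X : Hilbert} (f : X -> R) (g : X -> X) : Prop :=
  forall x : X, forall eps, 0 < eps -> exists delta, 0 < delta /\
    forall h : X, hnorm h < delta ->
      Rabs (f (hadd x h) - f x - hinner (g x) h) <= eps * hnorm h.

Definition lipschitz {X : Hilbert} (g : X -> X) (L : R) : Prop :=
  0 < L /\ forall x y : X, hnorm (hsub (g x) (g y)) <= L * hnorm (hsub x y).

(* Main.v *)
Require Import Defs.
From Stdlib Require Import Reals Lra Lia ZArith.
From Coquelicot Require Import Coquelicot.
From Stdlib Require Import ssreflect.
Open Scope R_scope.
Lemma inner_zero_l (X : Hilbert) (v : X) : hinner hzero v = 0.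
Proof. have h := hinner_add_l X hzero hzero v. rewrite hadd_zero in h. lra. Qed.

Lemma inner_opp_l (X : Hilbert) (u v : X) : hinner (hopp u) v = - hinner u v.
Proof. have h := hinner_add_l X u (hopp u) v. rewrite hadd_opp inner_zero_l in h. lra. Qed.

Lemma inner_add_r (X : Hilbert) (u v w : X) : hinner u (hadd v w) = hinner u v + hinner u w.
Proof. rewrite hinner_sym hinner_add_l (hinner_sym _ v) (hinner_sym _ w). reflexivity. Qed.

Lemma inner_scal_r (X : Hilbert) a (u v : X) : hinner u (hscal a v) = a * hinner u v.
Proof. rewrite hinner_sym hinner_scal_l (hinner_sym _ v). reflexivity. Qed.

Lemma scal0 (X : Hilbert) (d : X) : hscal 0 d = hzero.
Proof.
  have h := hscal_distr_r X 0 0 d. rewrite Rplus_0_r in h.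
  rewrite -(hadd_zero X (hscal 0 d)) -(hadd_opp X (hscal 0 d)) hadd_assoc -h.
  reflexivity.
Qed.

Lemma sub_add (X : Hilbert) (x w : X) : hadd (hadd x w) (hopp x) = w.
Proof. rewrite (hadd_comm X x w) -hadd_assoc hadd_opp hadd_zero. reflexivity. Qed.

Lemma hn_scal (X : Hilbert) s (d : X) : hnorm (hscal s d) = Rabs s * hnorm d.
Proof.
  unfold hnorm. rewrite hinner_scal_l inner_scal_r -Rmult_assoc.
  rewrite sqrt_mult. 2: apply Rle_0_sqr. 2: apply hinner_pos.
  rewrite -sqrt_Rsqr_abs. reflexivity.
Qed.

Lemma hn_pos (X : Hilbert) (u : X) : 0 <= hnorm u.
Proof. apply sqrt_pos. Qed.

Lemma hn_sq (X : Hilbert) (u : X) : hnorm u * hnorm u = hinner u u.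
Proof. apply sqrt_sqrt, hinner_pos. Qed.

Lemma expand (X : Hilbert) (u v : X) r :
  hinner (hadd u (hscal r v)) (hadd u (hscal r v)) =
  hinner u u + 2 * r * hinner u v + r * r * hinner v v.
Proof.
  rewrite !hinner_add_l !inner_add_r !hinner_scal_l !inner_scal_r (hinner_sym _ v u). ring.
Qed.

Lemma hn0 (X : Hilbert) (u : X) : hnorm u = 0 -> u = hzero.
Proof. intro h. apply hinner_def. apply sqrt_eq_0. apply hinner_pos. exact h. Qed.

Lemma CS (X : Hilbert) (u v : X) : hinner u v <= hnorm u * hnorm v.
Proof.
  have ha := hn_pos X u. have hb := hn_pos X v.
  destruct (Req_dec (hnorm u) 0) as [e|ne].
  { rewrite e (hn0 X u e) inner_zero_l. lra. }
  destruct (Req_dec (hnorm v) 0) as [e'|ne'].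
  { rewrite e' (hn0 X v e') hinner_sym inner_zero_l. lra. }
  set a := hnorm u in ha ne |- *. set b := hnorm v in hb ne' |- *.
  have hp := hinner_pos X (hadd u (hscal (- (a / b)) v)).
  rewrite expand -!hn_sq -/a -/b in hp.
  assert (hs : a / b * b = a) by (field; lra).
  set s := a / b in hp hs.
  assert (0 < a) by lra. assert (0 < b) by lra.
  assert (hss : - s * - s * (b * b) = a * a) by (rewrite -hs; ring).
  assert (h1 : s * hinner u v <= a * a) by lra.
  assert (h2 : a * hinner u v <= a * (a * b)) by nra.
  nra.
Qed.

Lemma line_deriv (X : Hilbert) (f : X -> R) (g : X -> X) (Hgrad : is_gradient f g)
  (x d : X) s :
  derivable_pt_lim (fun s => f (hadd x (hscal s d))) s (hinner (g (hadd x (hscal s d))) d).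
Proof.
  intros eps Heps.
  set nd := hnorm d. have hnd : 0 <= nd by apply hn_pos.
  destruct (Hgrad (hadd x (hscal s d)) (eps / (2 * (nd + 1)))) as [delta [Hd H]].
  { apply Rdiv_lt_0_compat; lra. }
  assert (hdp : 0 < delta / (nd + 1)) by (apply Rdiv_lt_0_compat; lra).
  exists (mkposreal _ hdp). simpl. intros h hne hlt.
  specialize (H (hscal h d)).
  rewrite hn_scal -hadd_assoc -hscal_distr_r inner_scal_r -/nd in H.
  assert (hh : 0 < Rabs h) by (apply Rabs_pos_lt; exact hne).
  assert (hlt2 : Rabs h * nd < delta).
  { apply Rmult_lt_compat_r with (r := nd + 1) in hlt; [|lra].
    unfold Rdiv in hlt. rewrite Rmult_assoc Rinv_l in hlt; [|lra]. nra. }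
  specialize (H hlt2).
  set N := f (hadd x (hscal (s + h) d)) - f (hadd x (hscal s d)) - h * hinner (g (hadd x (hscal s d))) d in H.
  replace ((f (hadd x (hscal (s + h) d)) - f (hadd x (hscal s d))) / h -
     hinner (g (hadd x (hscal s d))) d) with (N * / h) by (unfold N; field; exact hne).
  rewrite Rabs_mult Rabs_inv.
  apply Rle_lt_trans with (eps / (2 * (nd + 1)) * nd).
  { apply Rmult_le_reg_r with (Rabs h). lra.
    rewrite Rmult_assoc Rinv_l. 2: lra. nra. }
  assert (eps / (2 * (nd + 1)) * (nd + 1) = eps / 2) by (field; lra).
  assert (0 < eps / (2 * (nd + 1))) by (apply Rdiv_lt_0_compat; lra).
  nra.
Qed.
Lemma descent (X : Hilbert) (f : X -> R) (g : X -> X) (Hgrad : is_gradient f g)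
  L (HL : lipschitz g L) (x d : X) t : 0 < t ->
  f (hadd x (hscal t d)) <= f x + t * hinner (g x) d + L / 2 * t ^ 2 * hnorm d ^ 2.
Proof.
  intro ht. destruct HL as [HL0 HL].
  set c := hinner (g x) d. set K := L / 2 * hnorm d ^ 2.
  set psi := fun s => f (hadd x (hscal s d)) - (c * s + K * (s * s)).
  set psi' := fun s => hinner (g (hadd x (hscal s d))) d - (c + K * (2 * s)).
  destruct (MVT_cor2 psi psi' 0 t ht) as [z [Hz Hzr]].
  { intros z _. unfold psi, psi'.
    apply (derivable_pt_lim_minus (fun s => f (hadd x (hscal s d))) (fun s => c * s + K * (s * s))).
    - apply line_deriv. exact Hgrad.
    - apply is_derive_Reals. auto_derive. auto. ring. }
  assert (Hneg : psi' z <= 0).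
  { unfold psi'.
    have e : hinner (g (hadd x (hscal z d))) d - c = hinner (hsub (g (hadd x (hscal z d))) (g x)) d.
    { unfold hsub, c. rewrite hinner_add_l inner_opp_l. ring. }
    have h1 := CS X (hsub (g (hadd x (hscal z d))) (g x)) d.
    have h2 := HL (hadd x (hscal z d)) x.
    unfold hsub in h2 at 2. rewrite sub_add hn_scal Rabs_pos_eq in h2; [|lra].
    have hnd := hn_pos X d.
    have h3 : hnorm (hsub (g (hadd x (hscal z d))) (g x)) * hnorm d <= L * (z * hnorm d) * hnorm d.
    { apply Rmult_le_compat_r; auto. }
    unfold K. assert (L / 2 * hnorm d ^ 2 * (2 * z) = L * (z * hnorm d) * hnorm d) by (simpl; field). clearbody c. lra. }
  assert (hm : psi' z * (t - 0) <= 0).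
  { have : 0 <= - psi' z * (t - 0) by (apply Rmult_le_pos; lra). lra. }
  unfold psi in Hz. rewrite scal0 hadd_zero in Hz.
  assert (K * (t * t) = L / 2 * t ^ 2 * hnorm d ^ 2) by (unfold K; simpl; field).
  clearbody psi'. unfold c in *. lra.
Qed.
Lemma accept (X : Hilbert) (f : X -> R) (g : X -> X) (Hgrad : is_gradient f g)
  L (HA1 : lipschitz g L) c1 c2 (Hc1 : 0 < c1) (Hc2 : 0 < c2) rho (Hrho : 0 < rho < 1)
  (x d : X) t nu (Hnu : 0 <= nu)
  (HA3a : hinner (g x) d <= - c1 * (hnorm (g x)) ^ 2)
  (HA3b : hnorm d <= c2 * hnorm (g x)) :
  0 < t -> t <= 2 * (1 - rho) * c1 / (L * c2 ^ 2) ->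
  f (hadd x (hscal t d)) <= f x + rho * t * hinner (g x) d + nu.
Proof.
  intros ht hA.
  have hd := descent X f g Hgrad L HA1 x d t ht.
  destruct HA1 as [HL _].
  set c := hinner (g x) d in HA3a hd |- *.
  set ng := hnorm (g x) in HA3a HA3b.
  set nd := hnorm d in HA3b hd.
  have hnd : 0 <= nd by apply hn_pos.
  have hng : 0 <= ng by apply hn_pos.
  have h1 : nd ^ 2 <= c2 ^ 2 * ng ^ 2.
  { rewrite -Rpow_mult_distr. apply pow_incr. lra. }
  have hLc : 0 < L * c2 ^ 2 by (apply Rmult_lt_0_compat; [lra| apply pow_lt; lra]).
  have h2 : t * (L * c2 ^ 2) <= 2 * (1 - rho) * c1.
  { apply Rmult_le_compat_r with (r := L * c2 ^ 2) in hA; [|lra].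
    unfold Rdiv in hA. rewrite Rmult_assoc Rinv_l in hA; lra. }
  have hG : 0 <= ng ^ 2 by (apply pow_le; lra).
  have h3 : L / 2 * t * nd ^ 2 <= L / 2 * t * (c2 ^ 2 * ng ^ 2).
  { apply Rmult_le_compat_l; [|lra]. apply Rmult_le_pos; lra. }
  have h4 : L / 2 * t * (c2 ^ 2 * ng ^ 2) <= (1 - rho) * c1 * ng ^ 2.
  { have this : L / 2 * t * (c2 ^ 2 * ng ^ 2) = (t * (L * c2 ^ 2)) / 2 * ng ^ 2 by field.
    rewrite this. apply Rmult_le_compat_r; lra. }
  have h5 : (1 - rho) * c <= - (1 - rho) * c1 * ng ^ 2.
  { have this : - (1 - rho) * c1 * ng ^ 2 = (1 - rho) * (- c1 * ng ^ 2) by ring.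
    rewrite this. apply Rmult_le_compat_l; lra. }
  have h6 : t * ((1 - rho) * c + L / 2 * t * nd ^ 2) <= 0.
  { have this : 0 <= t * - ((1 - rho) * c + L / 2 * t * nd ^ 2) by (apply Rmult_le_pos; lra). lra. }
  have e : L / 2 * t ^ 2 * nd ^ 2 = t * (L / 2 * t * nd ^ 2) by ring.
  have e2 : t * ((1 - rho) * c + L / 2 * t * nd ^ 2) = t * c - rho * t * c + t * (L / 2 * t * nd ^ 2) by ring.
  lra.
Qed.

Lemma ln_powerRZ_pred b n : 0 < b ->
  ln (powerRZ b (Z.of_nat n - 1)) = (INR n - 1) * ln b.
Proof.
  intro hb. rewrite powerRZ_Rpower // /Rpower ln_exp minus_IZR -INR_IZR_INZ. reflexivity.
Qed.
Theorem theorem1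
  (X : Hilbert) (f : X -> R) (g : X -> X) (Hgrad : is_gradient f g)
  (L : R) (HA1 : lipschitz g L)
  (c1 c2 : R) (Hc1 : 0 < c1) (Hc2 : 0 < c2)
  (alpha0 beta rho : R) (Ha0 : 0 < alpha0)
  (Hbeta : 0 < beta < 1) (Hrho : 0 < rho < 1)
  (x d : nat -> X) (alpha : nat -> R) (l : nat -> nat) (nu : nat -> nat -> R)
  (Hnu : forall k j, 0 <= nu k j)
  (Halpha0 : alpha 0%nat = alpha0)
  (Hdesc : forall k, hinner (g (x k)) (d k) < 0)
  (HA3a : forall k, hinner (g (x k)) (d k) <= - c1 * (hnorm (g (x k))) ^ 2)
  (HA3b : forall k, hnorm (d k) <= c2 * hnorm (g (x k)))
  (Hacc : forall k,
     f (hadd (x k) (hscal (alpha k * beta ^ (l k)) (d k)))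
       <= f (x k) + rho * (alpha k * beta ^ (l k)) * hinner (g (x k)) (d k) + nu k (l k))
  (Hfirst : forall k j, (j < l k)%nat ->
     ~ (f (hadd (x k) (hscal (alpha k * beta ^ j) (d k)))
          <= f (x k) + rho * (alpha k * beta ^ j) * hinner (g (x k)) (d k) + nu k j))
  (Hx : forall k, x (S k) = hadd (x k) (hscal (alpha k * beta ^ (l k)) (d k)))
  (Halpha : forall k, alpha (S k) = alpha k * powerRZ beta (Z.of_nat (l k) - 1)) :
  forall k : nat,
    sum_f_R0 (fun j => INR (l j + 1)) k
      <= 2 * (INR k + 1)
         + / ln beta * (ln (Rmin alpha0 (2 * (1 - rho) * c1 / (L * c2 ^ 2))) - ln alpha0).
Proof.
  have HL : 0 < L by destruct HA1.
  set A := 2 * (1 - rho) * c1 / (L * c2 ^ 2).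
  have hA : 0 < A.
  { unfold A. apply Rdiv_lt_0_compat. apply Rmult_lt_0_compat; lra.
    apply Rmult_lt_0_compat; [lra | apply pow_lt; lra]. }
  set abar := Rmin alpha0 A.
  have hab : 0 < abar by apply Rmin_pos.
  have Hpos : forall k, 0 < alpha k /\ abar <= alpha k.
  { induction k as [|k [IH1 IH2]].
    - rewrite Halpha0. split; [lra | apply Rmin_l].
    - rewrite Halpha. split.
      + apply Rmult_lt_0_compat; [lra | apply powerRZ_lt; lra].
      + destruct (l k) as [|m] eqn:El.
        * simpl. have hi : beta * / beta = 1 by (apply Rinv_r; lra).
          have hi0 : 0 < / beta by (apply Rinv_0_lt_compat; lra).
          rewrite Rmult_1_r. nra.
        * have ez : (Z.of_nat (S m) - 1)%Z = Z.of_nat m by lia.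
          rewrite ez -pow_powerRZ.
          have hm : (m < l k)%nat by lia.
          have hnot := Hfirst k m hm.
          have hpm : 0 < alpha k * beta ^ m by (apply Rmult_lt_0_compat; [lra | apply pow_lt; lra]).
          destruct (Rle_lt_dec (alpha k * beta ^ m) A) as [hle|hlt].
          -- exfalso. apply hnot.
             apply (accept X f g Hgrad L HA1 c1 c2 Hc1 Hc2 rho Hrho); auto.
          -- have := Rmin_r alpha0 A. fold abar. lra. }
  have Hln : forall k, ln (alpha (S k)) = ln (alpha k) + (INR (l k) - 1) * ln beta.
  { intro k. rewrite Halpha ln_mult; [| apply (proj1 (Hpos k)) | apply powerRZ_lt; lra].
    rewrite ln_powerRZ_pred; [reflexivity | lra]. }
  have Hsum : forall k, sum_f_R0 (fun j => INR (l j + 1)) k * ln beta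
      = 2 * (INR k + 1) * ln beta + ln (alpha (S k)) - ln alpha0.
  { induction k as [|k IH].
    - simpl. rewrite Hln Halpha0 plus_INR. simpl. ring.
    - simpl sum_f_R0. rewrite Rmult_plus_distr_r IH (Hln (S k)) plus_INR (S_INR k). change (INR 1) with 1. ring. }
  intro k.
  have hlb : ln beta < 0 by (rewrite -ln_1; apply ln_increasing; lra).
  set lb := ln beta in hlb Hsum |- *.
  have hi : lb * / lb = 1 by (apply Rinv_r; lra).
  have hi0 : / lb < 0 by (apply Rinv_lt_0_compat; lra).
  have hle : ln abar <= ln (alpha (S k)).
  { destruct (Hpos (S k)) as [_ h]. destruct (Rle_lt_or_eq_dec _ _ h) as [h'|h'].
    - left. apply ln_increasing; lra.
    - rewrite h'. lra. }
  set s := sum_f_R0 (fun j => INR (l j + 1)) k in Hsum |- *.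
  have es : s = s * lb * / lb by (rewrite Rmult_assoc hi; ring).
  rewrite es (Hsum k).
  have : (ln (alpha (S k)) - ln alpha0) * / lb <= (ln abar - ln alpha0) * / lb.
  { have hp : 0 <= (ln (alpha (S k)) - ln abar) * - / lb by (apply Rmult_le_pos; lra). nra. }
  have e2 : (2 * (INR k + 1) * lb + ln (alpha (S k)) - ln alpha0) * / lb
     = 2 * (INR k + 1) * (lb * / lb) + (ln (alpha (S k)) - ln alpha0) * / lb by ring.
  rewrite e2 hi. nra.
Qed.
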